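(* Let $R$ be a left coherent ring and let $\kappa\geq |R|$ be an infinite cardinal. Let $\mathcal{U}$ be a set of isomorphism representatives for the class of all FP-injective left $R$-modules $A$ with $|A|\leq\kappa$. Let $f\colon A\to B$ be a homomorphism between FP-injective left $R$-modules such that $f_*\colon \mathrm{Hom}_R(U,A)\to\mathrm{Hom}_R(U,B)$ is surjective for every $U\in\mathcal{U}$. Then $f$ is surjective and $\ker f$ is FP-injective. (That is, $\mathcal{U}$ is a set of admissible generators for the full subcategory of FP-injective modules with its inherited exact structure.)
   Context: A left $R$-module $M$ is FP-injective (absolutely pure) if $\mathrm{Ext}^1_R(F,M)=0$ for every finitely presented left $R$-module $F$. A ring is left coherent if every finitely generated left ideal is finitely presented. *)

(* Defs.v *)
From HB Require Import structures.
From mathcomp Require Import all_boot all_order all_algebra.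
Set Implicit Arguments. Unset Strict Implicit. Unset Printing Implicit Defensive.
Import GRing.Theory.
Local Open Scope ring_scope.

(* Left R-modules are [lmodType R] (scalars act on the left); homomorphisms are
   [{linear M -> N}]. The free left module R^n is ['rV[R]_n]; the left regular
   module R is [R^o]. *)

Definition lsurj (T U : Type) (f : T -> U) := forall u, exists t, f t = u.

Definition fin_pres (R : pzRingType) (M : lmodType R) : Prop :=
  exists (n m : nat) (p : {linear 'rV[R]_n -> M}) (g : {linear 'rV[R]_m -> 'rV[R]_n}),
    lsurj p /\ (forall v, p v = 0 <-> exists w, v = g w).

(* Ext^1_R(F, M) = 0, in its Yoneda description: every short exact sequence
   0 -> M -> E -> F -> 0 of left R-modules splits. *)
Definition ext1_vanishes (R : pzRingType) (F M : lmodType R) : Prop :=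
  forall (E : lmodType R) (i : {linear M -> E}) (p : {linear E -> F}),
    injective i -> lsurj p -> (forall e, p e = 0 <-> exists x, e = i x) ->
    exists r : {linear E -> M}, forall x, r (i x) = x.

Definition FP_injective (R : pzRingType) (M : lmodType R) : Prop :=
  forall F : lmodType R, fin_pres F -> ext1_vanishes F M.

(* Left ideals of R are the submodules of the regular left module R^o.
   A finitely generated left ideal is the image of some R^n -> R; it is
   finitely presented if it admits a surjection from some R^n' whose kernel
   is finitely generated. *)
Definition left_coherent (R : pzRingType) : Prop :=
  forall (n : nat) (q : {linear 'rV[R]_n -> R^o}),
    exists (n' m : nat) (p : {linear 'rV[R]_n' -> R^o})
           (g : {linear 'rV[R]_m -> 'rV[R]_n'}),
      (forall x : R, (exists v, p v = x) <-> (exists v, q v = x)) /\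
      (forall v, p v = 0 <-> exists w, v = g w).

(* Cardinal comparisons, with cardinals represented by types. *)
Definition card_le (T U : Type) : Prop := exists f : T -> U, injective f.
Definition infinite_type (T : Type) : Prop := card_le nat T.

Definition lmod_iso (R : pzRingType) (M N : lmodType R) : Prop :=
  exists f : {linear M -> N}, bijective f.

(* Main.v *)
From Stdlib Require Import Classical ClassicalEpsilon FunctionalExtensionality PropExtensionality.
From mathcomp Require Import classical_sets.
Require Import Defs.
From HB Require Import structures.
From mathcomp Require Import all_boot all_order all_algebra.
Set Implicit Arguments. Unset Strict Implicit. Unset Printing Implicit Defensive.
Import GRing.Theory.
Local Open Scope ring_scope.

Local Open Scope nat_scope.
Section Card.
Variable T : Type.

Definition injon (A : T -> Prop) (f : T -> T) :=
  forall x y, A x -> A y -> f x = f y -> x = y.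

Lemma compar (t0 : T) (A B : T -> Prop) :
  (exists f, (forall x, A x -> B (f x)) /\ injon A f) \/
  (exists g, (forall y, B y -> A (g y)) /\ injon B g).
Proof.
pose P := fun G : set (T*T) =>
  (forall x y, G (x,y) -> A x /\ B y) /\
  (forall x y y', G (x,y) -> G (x,y') -> y = y') /\
  (forall x x' y, G (x,y) -> G (x',y) -> x = x').
have [G [[GAB [Gf Gi]] Gmax]] : exists G, P G /\ forall G', classical_sets.proper G G' -> ~ P G'.
  apply: Zorn_bigcup => F FP Ftot; split; [|split].
  - by move=> x y [G FG Gxy]; exact: ((FP G FG).1 _ _ Gxy).
  - move=> x y y' [G1 F1 H1] [G2 F2 H2].
    case: (Ftot _ _ F1 F2) => S.
    + exact: ((FP G2 F2).2.1 x y y' (S _ H1) H2).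
    + exact: ((FP G1 F1).2.1 x y y' H1 (S _ H2)).
  - move=> x x' y [G1 F1 H1] [G2 F2 H2].
    case: (Ftot _ _ F1 F2) => S.
    + exact: ((FP G2 F2).2.2 x x' y (S _ H1) H2).
    + exact: ((FP G1 F1).2.2 x x' y H1 (S _ H2)).
case: (classic (forall x, A x -> exists y, G (x,y))) => [HA|nA].
  left; exists (fun x => epsilon (inhabits t0) (fun y => G (x,y))); split.
  - by move=> x Ax; have /GAB[] := epsilon_spec (inhabits t0) _ (HA x Ax).
  - move=> x x' Ax Ax' E.
    have H1 := epsilon_spec (inhabits t0) _ (HA x Ax).
    have H2 := epsilon_spec (inhabits t0) _ (HA x' Ax').
    rewrite E in H1; exact: (Gi _ _ _ H1 H2).
case: (classic (forall y, B y -> exists x, G (x,y))) => [HB|nB].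
  right; exists (fun y => epsilon (inhabits t0) (fun x => G (x,y))); split.
  - by move=> y By; have /GAB[] := epsilon_spec (inhabits t0) _ (HB y By).
  - move=> y y' By By' E.
    have H1 := epsilon_spec (inhabits t0) _ (HB y By).
    have H2 := epsilon_spec (inhabits t0) _ (HB y' By').
    rewrite E in H1; exact: (Gf _ _ _ H1 H2).
exfalso.
have [x0 [Ax0 nx0]] : exists x, A x /\ ~ exists y, G (x,y).
  apply: NNPP => C; apply: nA => x Ax; apply: NNPP => nx; apply: C; by exists x.
have [y0 [By0 ny0]] : exists y, B y /\ ~ exists x, G (x,y).
  apply: NNPP => C; apply: nB => y By; apply: NNPP => nx; apply: C; by exists y.
apply: (Gmax (fun p => G p \/ p = (x0,y0))).
  split; first by move=> p Gp; left.
  by move=> H; apply: nx0; exists y0; apply: H; right.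
split; [|split].
- by move=> x y [/GAB//|[-> ->]].
- move=> x y y' [H1|[E1 E2]] [H2|[E3 E4]]; subst => //.
  + by exact: (Gf _ _ _ H1 H2).
  + by case: nx0; exists y.
  + by case: nx0; exists y'.
- move=> x x' y [H1|[E1 E2]] [H2|[E3 E4]]; subst => //.
  + by exact: (Gi _ _ _ H1 H2).
  + by case: ny0; exists x.
  + by case: ny0; exists x'.
Qed.

Variable iota : nat -> T.
Hypothesis iota_inj : injective iota.

Definition Yd (G : set ((T*T)*T)) x := exists c, G ((x,x),c).

Definition HP (G : set ((T*T)*T)) :=
 (forall a b c, G ((a,b),c) -> Yd G a /\ Yd G b /\ Yd G c) /\
 (forall a b, Yd G a -> Yd G b -> exists c, G((a,b),c)) /\
 (forall p c c', G (p,c) -> G (p,c') -> c = c') /\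
 (forall p p' c, G (p,c) -> G (p',c) -> p = p') /\
 ((forall e, ~ G e) \/ (forall n, Yd G (iota n))).

Lemma Yd_mono (G G' : set ((T*T)*T)) x : (forall e, G e -> G' e) -> Yd G x -> Yd G' x.
Proof. by move=> S [c Gc]; exists c; apply: S. Qed.

Definition emi := excluded_middle_informative.

Lemma hessenberg : exists pi : T * T -> T, injective pi.
Proof.
have [G [[Ga [Gb [Gc [Gd Ge]]]] Gmax]] :
    exists G, HP G /\ forall G', classical_sets.proper G G' -> ~ HP G'.
  apply: Zorn_bigcup => F FP Ftot.
  have sub : forall G, F G -> forall e, G e -> bigcup F id e.
    by move=> G FG e Ge; exists G.
  split; [|split; [|split; [|split]]].
  - move=> a b c [G FG Gabc]; have [? [? ?]] := (FP G FG).1 _ _ _ Gabc.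
    by split; [|split]; apply: Yd_mono (sub G FG) _.
  - move=> a b [c1 [G1 F1 H1]] [c2 [G2 F2 H2]].
    case: (Ftot _ _ F1 F2) => S.
    + have [c Hc] := (FP G2 F2).2.1 a b (ex_intro _ c1 (S _ H1)) (ex_intro _ c2 H2).
      by exists c; exists G2.
    + have [c Hc] := (FP G1 F1).2.1 a b (ex_intro _ c1 H1) (ex_intro _ c2 (S _ H2)).
      by exists c; exists G1.
  - move=> p c c' [G1 F1 H1] [G2 F2 H2].
    case: (Ftot _ _ F1 F2) => S.
    + exact: ((FP G2 F2).2.2.1 _ _ _ (S _ H1) H2).
    + exact: ((FP G1 F1).2.2.1 _ _ _ H1 (S _ H2)).
  - move=> p p' c [G1 F1 H1] [G2 F2 H2].
    case: (Ftot _ _ F1 F2) => S.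
    + exact: ((FP G2 F2).2.2.2.1 _ _ _ (S _ H1) H2).
    + exact: ((FP G1 F1).2.2.2.1 _ _ _ H1 (S _ H2)).
  - case: (classic (exists G, F G /\ exists e, G e)) => [[G [FG [e Ge]]]|N].
    + right => n; case: ((FP G FG).2.2.2.2) => [/(_ e Ge)//|H].
      exact: Yd_mono (sub G FG) (H n).
    + left => e [G FG Ge]; apply: N; exists G; split => //; by exists e.
pose pn := fun n m : nat => pickle (n, m).
have pn_inj : forall n m n' m', pn n m = pn n' m' -> n = n' /\ m = m'.
  move=> n m n' m' /(pcan_inj pickleK) [] -> ->; done.
pose G0 := fun e : (T*T)*T => exists n m, e = ((iota n, iota m), iota (pn n m)).
have G0Y : forall x, Yd G0 x <-> exists n, x = iota n.
  move=> x; split.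
  - by move=> [c [n [m [-> _ _]]]]; exists n.
  - by move=> [n ->]; exists (iota (pn n n)); exists n, n.
have HP0 : HP G0.
  split; [|split; [|split; [|split]]].
  - move=> a b c [n [m [-> -> ->]]].
    by split; [|split]; apply/G0Y; [exists n|exists m|exists (pn n m)].
  - move=> a b /G0Y[n ->] /G0Y[m ->]; exists (iota (pn n m)); by exists n, m.
  - move=> p c c' [n [m [-> ->]]] [n' [m' []]] /iota_inj <- /iota_inj <- ->.
    done.
  - move=> p p' c [n [m [-> ->]]] [n' [m' [-> /iota_inj/pn_inj [-> ->]]]].
    done.
  - by right => n; apply/G0Y; exists n.
have Gne : forall n, Yd G (iota n).
  case: Ge => [Gempty|//]; exfalso.
  apply: (Gmax G0) => //; split.
  - by move=> e /Gempty.
  - move=> S; apply: (Gempty ((iota 0, iota 0), iota (pn 0 0))); apply: S.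
    by exists 0, 0.
pose Y := Yd G.
pose t0 := iota 0.
pose pr := fun a b => epsilon (inhabits t0) (fun c => G ((a,b),c)).
have prP : forall a b, Y a -> Y b -> G ((a,b), pr a b).
  by move=> a b Ya Yb; apply: (epsilon_spec (inhabits t0) (fun c => G ((a,b),c))); apply: Gb.
have prY : forall a b, Y a -> Y b -> Y (pr a b).
  by move=> a b Ya Yb; have [_ [_ ?]] := Ga _ _ _ (prP a b Ya Yb).
have prI : forall a b a' b', Y a -> Y b -> Y a' -> Y b' -> pr a b = pr a' b' ->
    a = a' /\ b = b'.
  move=> a b a' b' Ya Yb Ya' Yb' E.
  have H1 := prP a b Ya Yb; have H2 := prP a' b' Ya' Yb'.
  rewrite E in H1; by case: (Gd _ _ _ H1 H2).
case: (compar t0 Y (fun x => ~ Y x)) => [[j [jY jI]]|[g [gY gI]]]; last first.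
  pose emb := fun x => if emi (Y x) then pr x (iota 0) else pr (g x) (iota 1).
  have embY : forall x, Y (emb x).
    move=> x; rewrite /emb; case: (emi (Y x)) => Yx /=.
    - exact: (prY _ _ Yx (Gne 0)).
    - exact: (prY _ _ (gY _ Yx) (Gne 1)).
  exists (fun p => pr (emb p.1) (emb p.2)) => [[x y] [x' y']] /= E.
  have embI : forall x x', emb x = emb x' -> x = x'.
    move=> u u'; rewrite /emb.
    case: (emi (Y u)) => Yu; case: (emi (Y u')) => Yu' /= E'.
    - by case: (prI _ _ _ _ Yu (Gne 0) Yu' (Gne 0) E').
    - by case: (prI _ _ _ _ Yu (Gne 0) (gY _ Yu') (Gne 1) E') => _ /iota_inj.
    - by case: (prI _ _ _ _ (gY _ Yu) (Gne 1) Yu' (Gne 0) E') => _ /iota_inj.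
    - case: (prI _ _ _ _ (gY _ Yu) (Gne 1) (gY _ Yu') (Gne 1) E') => E1 _.
      exact: gI.
  by case: (prI _ _ _ _ (embY x) (embY y) (embY x') (embY y') E) => /embI -> /embI ->.
exfalso.
pose Z := fun x => exists y, Y y /\ x = j y.
pose W := fun x => Y x \/ Z x.
have ZnY : forall x, Z x -> ~ Y x by move=> x [y [Yy ->]]; apply: jY.
pose jinv := fun x => epsilon (inhabits t0) (fun y => Y y /\ x = j y).
have jinvP : forall x, Z x -> Y (jinv x) /\ x = j (jinv x).
  by move=> x Zx; apply: (epsilon_spec (inhabits t0) (fun y => Y y /\ x = j y)).
pose t := fun a => if emi (Y a) then a else jinv a.
have tY : forall a, W a -> Y (t a).
  move=> a Wa; rewrite /t; case: (emi (Y a)) => //= nYa.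
  case: Wa => // Za; exact: (jinvP a Za).1.
have tI : forall a a', W a -> W a' -> (Y a <-> Y a') -> t a = t a' -> a = a'.
  move=> a a' Wa Wa' [E1 E2]; rewrite /t.
  case: (emi (Y a)) => Ya; case: (emi (Y a')) => Ya' //= E.
  - by case: Ya'; apply: E1.
  - by case: Ya; apply: E2.
  - case: Wa => // Za; case: Wa' => // Za'.
    by rewrite (jinvP a Za).2 (jinvP a' Za').2 E.
pose code := fun a b => if emi (Y a) then iota 0 else if emi (Y b) then iota 1 else iota 2.
have codeI : forall a b a' b', ~ (Y a /\ Y b) -> ~ (Y a' /\ Y b') ->
    code a b = code a' b' -> (Y a <-> Y a') /\ (Y b <-> Y b').
  move=> a b a' b' N N'; rewrite /code.
  case: (emi (Y a)) => Ya; case: (emi (Y b)) => Yb;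
  case: (emi (Y a')) => Ya'; case: (emi (Y b')) => Yb' /= /iota_inj //;
  tauto.
have codeY : forall a b, Y (code a b).
  move=> a b; rewrite /code; case: (emi _) => _ /=; [exact: Gne|case: (emi _) => _ /=; exact: Gne].
pose val := fun a b => j (pr (pr (code a b) (t a)) (t b)).
pose H := fun e : (T*T)*T => W e.1.1 /\ W e.1.2 /\ ~ (Y e.1.1 /\ Y e.1.2) /\
   e.2 = val e.1.1 e.1.2.
pose G' := fun e => G e \/ H e.
have valY : forall a b, W a -> W b -> Y (pr (pr (code a b) (t a)) (t b)).
  by move=> a b Wa Wb; apply: (prY); [apply: (prY); [apply: codeY|apply: tY]|apply: tY].
have valZ : forall a b, W a -> W b -> Z (val a b).
  by move=> a b Wa Wb; exists (pr (pr (code a b) (t a)) (t b)); split => //; apply: valY.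
have GY : forall a b c, G ((a,b),c) -> Y a /\ Y b /\ Y c by move=> *; apply: Ga.
have YdG' : forall x, Yd G' x <-> W x.
  move=> x; split.
  - move=> [c [Gx|[Wx _]]]; last by [].
    by left; case: (GY _ _ _ Gx).
  - move=> Wx; case: (classic (Y x)) => Yx.
    + by apply: Yd_mono Yx => e; left.
    + exists (val x x); right; split => //; split => //; split => //.
      by case.
have SG : forall e, G e -> G' e by move=> e; left.
apply: (Gmax G').
  split => // S.
  have Z0 : Z (j (iota 0)) by exists (iota 0); split; [exact: Gne|].
  have /YdG'[c /S /GY [Yz _]] : W (j (iota 0)) by right.
  exact: ZnY Z0 Yz.
split; [|split; [|split; [|split]]].
- move=> a b c [/GY [Ya [Yb Yc]]|[Wa [Wb [_ /= ->]]]].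
  + by split; [|split]; apply: Yd_mono SG _.
  + by split; [|split]; apply/YdG' => //; right; apply: valZ.
- move=> a b /YdG' Wa /YdG' Wb.
  case: (classic (Y a /\ Y b)) => [[Ya Yb]|N].
  + by have [c Hc] := Gb a b Ya Yb; exists c; left.
  + by exists (val a b); right.
- move=> [a b] c c' [G1|[_ [_ [N1 /= ->]]]] [G2|[_ [_ [N2 /= ->]]]] //.
  + exact: Gc G1 G2.
  + by case: (GY _ _ _ G1) => Ya [Yb _]; case: N2.
  + by case: (GY _ _ _ G2) => Ya [Yb _]; case: N1.
- move=> [a b] [a' b'] c [G1|[Wa [Wb [N1 /= E1]]]] [G2|[Wa' [Wb' [N2 /= E2]]]].
  + exact: Gd G1 G2.
  + case: (GY _ _ _ G1) => _ [_ Yc]; apply: False_ind; apply: (ZnY c) => //.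
    by rewrite E2; apply: valZ.
  + case: (GY _ _ _ G2) => _ [_ Yc]; apply: False_ind; apply: (ZnY c) => //.
    by rewrite E1; apply: valZ.
  + rewrite E1 /val in E2.
    have := jI _ _ (valY a b Wa Wb) (valY a' b' Wa' Wb') E2.
    move=> /(prI _ _ _ _ _ (tY _ Wb) _ (tY _ Wb')) [].
      by apply: prY => //; apply: tY.
      by apply: prY => //; apply: tY.
    move=> /(prI _ _ _ _ (codeY a b) (tY _ Wa) (codeY a' b') (tY _ Wa')) [Ec Eta] Etb.
    have [Ia Ib] := codeI _ _ _ _ N1 N2 Ec.
    by move: (tI _ _ Wa Wa' Ia Eta) (tI _ _ Wb Wb' Ib Etb) => /= -> ->.
- by right => n; apply: Yd_mono SG (Gne n).
Qed.

End Card.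

Local Open Scope ring_scope.
Definition islin (R : pzRingType) (U V : lmodType R) (f : U -> V) :=
  forall a x y, f (a *: x + y) = a *: f x + f y.

Section MkLin.
Variables (R : pzRingType) (U V : lmodType R) (f : U -> V) (Hf : islin f).
Definition mklin_fun := f.
Lemma mklin_subproof : linear mklin_fun. Proof. move=> a x y; exact: Hf. Qed.
HB.instance Definition _ := GRing.isLinear.Build R U V *:%R mklin_fun mklin_subproof.
Definition mklin : {linear U -> V} := mklin_fun.
Lemma mklinE x : mklin x = f x. Proof. by []. Qed.
End MkLin.

Lemma linP (R : pzRingType) (U V : lmodType R) (f : {linear U -> V}) : islin f.
Proof. by move=> a x y; rewrite linearP. Qed.

Section Facts.
Variables (R : pzRingType).

Lemma lin_inj (U V : lmodType R) (f : {linear U -> V}) :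
  (forall x, f x = 0 -> x = 0) -> injective f.
Proof. by move=> H x y E; apply/eqP; rewrite -subr_eq0; apply/eqP/H; rewrite linearB E subrr. Qed.

Lemma inj_ker (U V : lmodType R) (f : {linear U -> V}) x : injective f -> f x = 0 -> x = 0.
Proof. by move=> fi fx; apply: fi; rewrite fx linear0. Qed.

Lemma factor_surj (U V W : lmodType R) (p : {linear U -> V}) (phi : {linear U -> W}) :
  lsurj p -> (forall u, p u = 0 -> phi u = 0) ->
  exists psi : {linear V -> W}, forall u, psi (p u) = phi u.
Proof.
move=> ps pk.
pose sec v := epsilon (inhabits 0) (fun u => p u = v).
have secP v : p (sec v) = v by apply: (epsilon_spec (inhabits 0) (fun u => p u = v)); apply: ps.
have key u u' : p u = p u' -> phi u = phi u'.
  move=> E; apply/eqP; rewrite -subr_eq0; apply/eqP; rewrite -linearB; apply: pk.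
  by rewrite linearB E subrr.
have hl : islin (fun v => phi (sec v)).
  move=> a x y; rewrite -linearP; apply: key; by rewrite linearP !secP.
exists (mklin hl) => u; rewrite mklinE; apply: key; exact: secP.
Qed.

Lemma factor_inj (U V W : lmodType R) (i : {linear U -> V}) (phi : {linear W -> V}) :
  injective i -> (forall w, exists u, phi w = i u) ->
  exists psi : {linear W -> U}, forall w, i (psi w) = phi w.
Proof.
move=> ii H.
pose g w := epsilon (inhabits 0) (fun u => phi w = i u).
have gP w : phi w = i (g w) by apply: (epsilon_spec (inhabits 0) (fun u => phi w = i u)).
have hl : islin g.
  move=> a x y; apply: ii; by rewrite linearP -!gP linearP.
by exists (mklin hl) => w; rewrite mklinE -gP.
Qed.

Lemma inv_lin (U V : lmodType R) (f : {linear U -> V}) : bijective f ->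
  exists g : {linear V -> U}, (forall x, g (f x) = x) /\ (forall y, f (g y) = y).
Proof.
move=> [h hK Kh].
have idl : islin (fun v : V => v) by [].
have [g gP] := factor_inj (phi:=mklin idl) (bij_inj (Bijective hK Kh)) (fun w => ex_intro _ (h w) (esym (Kh w))).
exists g; split => [x|y]; last by rewrite gP.
by apply: (bij_inj (Bijective hK Kh)); rewrite gP.
Qed.

End Facts.
Section Quot.
Variables (R : pzRingType) (V : lmodType R) (N : V -> Prop).
Hypothesis N0 : N 0.
Hypothesis NL : forall a x y, N x -> N y -> N (a *: x + y).

Lemma ND x y : N x -> N y -> N (x + y).
Proof. by move=> ? ?; rewrite -[x]scale1r; apply: NL. Qed.
Lemma NZ a x : N x -> N (a *: x).
Proof. by move=> ?; rewrite -[_ *: _]addr0; apply: NL. Qed.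
Lemma NN x : N x -> N (- x).
Proof. by move=> ?; rewrite -scaleN1r; apply: NZ. Qed.
Lemma NB x y : N x -> N y -> N (x - y).
Proof. by move=> ? ?; apply: ND => //; apply: NN. Qed.

Definition canon (x : V) := epsilon (inhabits 0) (fun y => N (x - y)).
Lemma canon_spec x : N (x - canon x).
Proof. by apply: (epsilon_spec (inhabits 0) (fun y => N (x - y))); exists x; rewrite subrr. Qed.
Lemma canon_spec' x : N (canon x - x).
Proof. by rewrite -opprB; apply: NN; apply: canon_spec. Qed.
Lemma canon_eq x y : N (x - y) -> canon x = canon y.
Proof.
move=> H; rewrite /canon; congr epsilon; apply: functional_extensionality => z.
apply: propositional_extensionality; split => Hz.
- by have := ND (NN H) Hz; rewrite opprB subrKA.
- by have := ND H Hz; rewrite subrKA.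
Qed.
Lemma canon_idem x : canon (canon x) == canon x.
Proof. apply/eqP/canon_eq; exact: canon_spec'. Qed.

Definition quot_of (n0 : N 0) (nl : forall a x y, N x -> N y -> N (a *: x + y)) := {x : V | canon x == x}.
Definition quot := quot_of N0 NL.
HB.instance Definition _ := Choice.copy quot {x : V | canon x == x}.

Definition qmk (x : V) : quot := exist _ (canon x) (canon_idem x).
Lemma qmk_eq x y : N (x - y) -> qmk x = qmk y.
Proof. by move=> H; apply: val_inj => /=; apply: canon_eq. Qed.
Lemma qmk_val (u : quot) : qmk (val u) = u.
Proof. by apply: val_inj => /=; apply/eqP; case: u. Qed.
Lemma qmk_inv x y : qmk x = qmk y -> N (x - y).
Proof.
move=> /(congr1 val) /= E.
by have := ND (canon_spec x) (NN (canon_spec y)); rewrite E opprB subrKA.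
Qed.

Definition qzero := qmk 0.
Definition qadd (u v : quot) := qmk (val u + val v).
Definition qopp (u : quot) := qmk (- val u).
Definition qscale (a : R) (u : quot) := qmk (a *: val u).

Lemma qaddE x y : qadd (qmk x) (qmk y) = qmk (x + y).
Proof.
by apply: qmk_eq => /=; rewrite opprD addrACA; apply: ND; apply: canon_spec'.
Qed.
Lemma qoppE x : qopp (qmk x) = qmk (- x).
Proof. by apply: qmk_eq => /=; rewrite opprK addrC; apply: canon_spec. Qed.
Lemma qscaleE a x : qscale a (qmk x) = qmk (a *: x).
Proof. by apply: qmk_eq => /=; rewrite -scalerBr; apply: NZ; apply: canon_spec'. Qed.

Lemma qmk_ind (P : quot -> Prop) : (forall x, P (qmk x)) -> forall u, P u.
Proof. by move=> H u; rewrite -(qmk_val u). Qed.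

Lemma qaddA : associative qadd.
Proof. by elim/qmk_ind => x; elim/qmk_ind => y; elim/qmk_ind => z; rewrite !qaddE addrA. Qed.
Lemma qaddC : commutative qadd.
Proof. by elim/qmk_ind => x; elim/qmk_ind => y; rewrite !qaddE addrC. Qed.
Lemma qadd0 : left_id qzero qadd.
Proof. by elim/qmk_ind => x; rewrite /qzero qaddE add0r. Qed.
Lemma qaddN : left_inverse qzero qopp qadd.
Proof. by elim/qmk_ind => x; rewrite qoppE qaddE addNr. Qed.

HB.instance Definition _ := GRing.isZmodule.Build quot qaddA qaddC qadd0 qaddN.

Lemma qscaleA a b u : qscale a (qscale b u) = qscale (a * b) u.
Proof. by elim/qmk_ind: u => x; rewrite !qscaleE scalerA. Qed.
Lemma qscale1 : left_id 1 qscale.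
Proof. by elim/qmk_ind => x; rewrite qscaleE scale1r. Qed.
Lemma qscaleDr : right_distributive qscale +%R.
Proof. by move=> a; elim/qmk_ind => x; elim/qmk_ind => y; rewrite /GRing.add /= (qaddE x y) (qscaleE a x) (qscaleE a y) (qaddE (a *: x) (a *: y)) qscaleE scalerDr. Qed.
Lemma qscaleDl u : {morph qscale^~ u : a b / a + b}.
Proof. by elim/qmk_ind: u => x a b; rewrite /GRing.add /= !qscaleE qaddE scalerDl. Qed.

HB.instance Definition _ := GRing.Zmodule_isLmodule.Build R quot qscaleA qscale1 qscaleDr qscaleDl.

Lemma qmk_lin : islin (qmk : V -> quot).
Proof. by move=> a x y; rewrite /GRing.add /GRing.scale /= qscaleE qaddE. Qed.

Definition qpi : {linear V -> quot} := mklin qmk_lin.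

Lemma qpi_surj : lsurj qpi.
Proof. by move=> u; exists (val u); rewrite mklinE qmk_val. Qed.
Lemma qpi_ker x : qpi x = 0 <-> N x.
Proof.
rewrite mklinE; split.
- by move=> /qmk_inv; rewrite subr0.
- by move=> H; apply: qmk_eq; rewrite subr0.
Qed.
End Quot.
Definition bp (P : Prop) : bool := if excluded_middle_informative P then true else false.
Lemma bpP (P : Prop) : bp P <-> P.
Proof. by rewrite /bp; case: (excluded_middle_informative P). Qed.

Section Sub.
Variables (R : pzRingType) (B : lmodType R) (Cs : B -> Prop).
Hypothesis C0 : Cs 0.
Hypothesis CL : forall a x y, Cs x -> Cs y -> Cs (a *: x + y).

Lemma CD x y : Cs x -> Cs y -> Cs (x + y).
Proof. by move=> ? ?; rewrite -[x]scale1r; apply: CL. Qed.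
Lemma CZ a x : Cs x -> Cs (a *: x).
Proof. by move=> ?; rewrite -[_ *: _]addr0; apply: CL. Qed.
Lemma CN x : Cs x -> Cs (- x).
Proof. by move=> ?; rewrite -scaleN1r; apply: CZ. Qed.

Definition subm_of (c0 : Cs 0) (cl : forall a x y, Cs x -> Cs y -> Cs (a *: x + y)) := {x : B | bp (Cs x)}.
Definition subm := subm_of C0 CL.
HB.instance Definition _ := Choice.copy subm {x : B | bp (Cs x)}.

Lemma svalP (u : subm) : Cs (val u).
Proof. by apply/bpP; case: u. Qed.

Definition szero : subm := exist _ 0 (proj2 (bpP _) C0).
Definition sadd (u v : subm) : subm :=
  exist _ (val u + val v) (proj2 (bpP _) (CD (svalP u) (svalP v))).
Definition sopp (u : subm) : subm := exist _ (- val u) (proj2 (bpP _) (CN (svalP u))).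
Definition sscale a (u : subm) : subm := exist _ (a *: val u) (proj2 (bpP _) (CZ a (svalP u))).

Lemma saddA : associative sadd.
Proof. by move=> u v w; apply: val_inj => /=; rewrite addrA. Qed.
Lemma saddC : commutative sadd.
Proof. by move=> u v; apply: val_inj => /=; rewrite addrC. Qed.
Lemma sadd0 : left_id szero sadd.
Proof. by move=> u; apply: val_inj => /=; rewrite add0r. Qed.
Lemma saddN : left_inverse szero sopp sadd.
Proof. by move=> u; apply: val_inj => /=; rewrite addNr. Qed.
HB.instance Definition _ := GRing.isZmodule.Build subm saddA saddC sadd0 saddN.
Lemma sscaleA a b u : sscale a (sscale b u) = sscale (a * b) u.
Proof. by apply: val_inj => /=; rewrite scalerA. Qed.
Lemma sscale1 : left_id 1 sscale.
Proof. by move=> u; apply: val_inj => /=; rewrite scale1r. Qed.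
Lemma sscaleDr : right_distributive sscale +%R.
Proof. by move=> a u v; apply: val_inj => /=; rewrite scalerDr. Qed.
Lemma sscaleDl u : {morph sscale^~ u : a b / a + b}.
Proof. by move=> a b; apply: val_inj => /=; rewrite scalerDl. Qed.
HB.instance Definition _ := GRing.Zmodule_isLmodule.Build R subm sscaleA sscale1 sscaleDr sscaleDl.

Lemma sval_lin : islin (fun u : subm => val u).
Proof. by []. Qed.
Definition sincl : {linear subm -> B} := mklin sval_lin.
Lemma sincl_inj : injective sincl.
Proof. by move=> u v; rewrite !mklinE; apply: val_inj. Qed.
Lemma sincl_im b : Cs b <-> exists u, b = sincl u.
Proof.
split.
- by move=> H; exists (exist _ b (proj2 (bpP _) H)).
- by move=> [u ->]; apply: svalP.
Qed.
End Sub.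


Lemma pair_lin (R : pzRingType) (E A : lmodType R) a (e e' : E) (x y : A) :
  a *: (e, x) + (e', y) = (a *: e + e', a *: x + y).
Proof. by []. Qed.

Lemma pair_sub (R : pzRingType) (E A : lmodType R) (e e' : E) (x y : A) :
  (e, x) - (e', y) = (e - e', x - y).
Proof. by []. Qed.

Lemma mklin_ex (R : pzRingType) (U V : lmodType R) (f : U -> V) :
  islin f -> exists g : {linear U -> V}, forall x, g x = f x.
Proof. by move=> H; exists (mklin H). Qed.

Lemma ext_hom (R : pzRingType) (A : lmodType R) (HA : FP_injective A)
  (K E F : lmodType R) (i : {linear K -> E}) (p : {linear E -> F}) :
  fin_pres F -> injective i -> lsurj p -> (forall e, p e = 0 <-> exists x, e = i x) ->
  forall k : {linear K -> A}, exists k' : {linear E -> A}, forall x, k' (i x) = k x.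
Proof.
move=> Ffp ii ps pk k.
pose N := fun v : E * A => exists x, v = (i x, - k x).
have N0 : N 0 by exists 0; rewrite !linear0.
have NL : forall a x y, N x -> N y -> N (a *: x + y).
  move=> a _ _ [x ->] [y ->]; exists (a *: x + y).
  by rewrite pair_lin !linearP.
have pis := qpi_surj (N0:=N0) (NL:=NL).
have pik := qpi_ker N0 NL.
move: (qpi N0 NL) pis pik => pi pis pik.
have piN : forall v w, N (v - w) -> pi v = pi w.
  move=> v w H; apply/eqP; rewrite -subr_eq0 -linearB; apply/eqP/pik; exact: H.
have jl : islin (fun a : A => pi (0, a)).
  by move=> a x y; rewrite -linearP pair_lin scaler0 addr0.
have [j jE] := mklin_ex jl.
have jinj : injective j.
  apply: lin_inj => a; rewrite jE => /pik [x [/esym ix ->]].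
  by rewrite (inj_ker ii ix) linear0 oppr0.
have pl : islin (fun v : E * A => p v.1) by move=> a x y; rewrite /= linearP.
have [pp ppE] := mklin_ex pl.
have [qf qfE] := factor_surj (p:=pi) (phi:=pp) pis
   (fun u H => ltac:(move/pik: H => [x ->]; rewrite ppE /=; apply/pk; by exists x)).
have qfs : lsurj qf.
  move=> f; have [e <-] := ps f; exists (pi (e, 0)); by rewrite qfE ppE.
have qfk : forall u, qf u = 0 <-> exists a, u = j a.
  move=> u; split.
  - have [[e a] <-] := pis u; rewrite qfE ppE /= => /pk [x ex].
    exists (a + k x); rewrite jE; refine (piN (e, a) (0, a + k x) _); exists x.
    by rewrite ex pair_sub subr0 opprD addrA subrr add0r.
  - by move=> [a ->]; rewrite jE qfE ppE /= linear0.
have [r rj] := HA F Ffp _ j qf jinj qfs qfk.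
have kl : islin (fun e : E => r (pi (e, 0))).
  by move=> a x y; rewrite -!linearP pair_lin scaler0 addr0.
have [k' k'E] := mklin_ex kl.
exists k' => x; rewrite k'E.
have -> : pi (i x, 0) = j (k x).
  rewrite jE; refine (piN (i x, 0) (0, k x) _); exists x; by rewrite pair_sub subr0 sub0r.
exact: rj.
Qed.


Definition pure_closed (R : pzRingType) (B : lmodType R) (Cs : B -> Prop) :=
  forall (m n : nat) (M : 'I_m -> 'I_n -> R) (c : 'I_m -> B),
  (forall l, Cs (c l)) ->
  (exists x : nat -> B, forall l, \sum_(k < n) M l k *: x k = c l) ->
  exists y : nat -> B, (forall k, Cs (y k)) /\ forall l, \sum_(k < n) M l k *: y k = c l.

Definition ofnat (n : nat) (X : Type) (d : X) (f : 'I_n -> X) (k : nat) : X :=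
  if insub k is Some t then f t else d.
Lemma ofnatE n X d (f : 'I_n -> X) (t : 'I_n) : ofnat d f t = f t.
Proof. by rewrite /ofnat valK. Qed.

Section LinFacts.
Variable R : pzRingType.
Lemma linZ (U V : lmodType R) (f : {linear U -> V}) a x : f (a *: x) = a *: f x.
Proof. by rewrite -[a *: x]addr0 linearP linear0 addr0. Qed.
Lemma sumlin (U : lmodType R) n (z : 'I_n -> U) :
  islin (fun v : 'rV[R]_n => \sum_t v 0 t *: z t).
Proof.
move=> a v w; rewrite scaler_sumr -big_split; apply: eq_bigr => t _.
by rewrite !mxE scalerDl scalerA.
Qed.
Lemma lin_sum (U V : lmodType R) (f : {linear U -> V}) n (c : 'I_n -> R) (z : 'I_n -> U) :
  f (\sum_t c t *: z t) = \sum_t c t *: f (z t).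
Proof. by rewrite linear_sum; apply: eq_bigr => t _; exact: linZ. Qed.
End LinFacts.

Lemma pure_fpi (R : pzRingType) (B : lmodType R) (HB : FP_injective B) (Cs : B -> Prop)
  (C0 : Cs 0) (CL : forall a x y, Cs x -> Cs y -> Cs (a *: x + y)) :
  pure_closed Cs -> FP_injective (subm C0 CL).
Proof.
move=> HP F Ffp E i p ii ps pk.
have [n [m [p0 [g0 [p0s p0k]]]]] := Ffp.
have ioi := sincl_inj (C0:=C0) (CL:=CL).
have ioim := sincl_im C0 CL.
move: (sincl C0 CL) ioi ioim => io ioi ioim.
have [io' io'E] := ext_hom HB (i:=i) (p:=p) Ffp ii ps pk io.
have [e eP] : exists e : 'I_n -> E, forall t, p (e t) = p0 'e_t.
  exists (fun t => epsilon (inhabits 0) (fun x => p x = p0 'e_t)) => t.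
  by apply: (epsilon_spec (inhabits 0) (fun x => p x = p0 'e_t)); apply: ps.
pose G := fun l : 'I_m => g0 'e_l.
have [c cP] : exists c : 'I_m -> subm C0 CL, forall l, \sum_t G l 0 t *: e t = i (c l).
  exists (fun l => epsilon (inhabits 0) (fun u => \sum_t G l 0 t *: e t = i u)) => l.
  apply: (epsilon_spec (inhabits 0) (fun u => \sum_t G l 0 t *: e t = i u)); apply/pk.
  rewrite lin_sum (eq_bigr (fun t => G l 0 t *: p0 'e_t)); last by move=> t _; rewrite eP.
  rewrite -lin_sum -row_sum_delta; apply/p0k; by exists 'e_l.
have [y [yC yE]] : exists y : nat -> B, (forall k, Cs (y k)) /\
    forall l, \sum_(k < n) G l 0 k *: y k = io (c l).
  apply: HP; first by move=> l; apply/ioim; exists (c l).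
  exists (ofnat 0 (fun t => io' (e t))) => l.
  rewrite (eq_bigr (fun t => G l 0 t *: io' (e t))); last by move=> t _; rewrite ofnatE.
  by rewrite -lin_sum cP io'E.
have [d dE] : exists d : 'I_n -> subm C0 CL, forall t, io (d t) = y t.
  exists (fun t => epsilon (inhabits 0) (fun u => y t = io u)) => t.
  symmetry; apply: (epsilon_spec (inhabits 0) (fun u => y t = io u)); apply/ioim; exact: yC.
have [s0 s0E] := mklin_ex (sumlin (fun t => e t - i (d t))).
have s0G : forall l, s0 (G l) = 0.
  move=> l; rewrite s0E (eq_bigr (fun t => G l 0 t *: e t - G l 0 t *: i (d t))); last first.
    by move=> t _; rewrite scalerBr.
  rewrite sumrB -lin_sum cP; apply/eqP; rewrite subr_eq0; apply/eqP; congr (i _).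
  by apply: ioi; rewrite lin_sum (eq_bigr (fun t => G l 0 t *: y t)) ?yE // => t _; rewrite dE.
have [s sE] : exists s : {linear F -> E}, forall v, s (p0 v) = s0 v.
  apply: factor_surj => // v /p0k [w ->].
  rewrite [w]row_sum_delta lin_sum lin_sum big1 // => l _.
  by rewrite s0G scaler0.
have ps' : forall f, p (s f) = f.
  move=> f; have [v <-] := p0s f; rewrite sE s0E lin_sum.
  rewrite [in RHS](row_sum_delta v) lin_sum; apply: eq_bigr => t _.
  rewrite linearB eP; congr (_ *: _); rewrite [X in _ - X](_ : _ = 0) ?subr0 //.
  by apply/pk; exists (d t).
have r0l : islin (fun x : E => x - s (p x)).
  by move=> a x z; rewrite (linearP p) (linearP s) scalerBr opprD addrACA.
have [r0 r0E] := mklin_ex r0l.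
have [r rE] := factor_inj (i:=i) (phi:=r0) ii (fun w => ltac:(apply/pk; rewrite r0E linearB ps' subrr; done)).
exists r => x; apply: ii; rewrite rE r0E.
have -> : p (i x) = 0 by apply/pk; exists x.
by rewrite linear0 subr0.
Qed.


Inductive code (R : Type) :=
| Leaf of nat
| Node of nat & nat & nat & seq (seq R) & seq (code R).

Arguments Leaf {R}.

Fixpoint code_ind2 (R : Type) (P : code R -> Prop) (HL : forall i, P (Leaf i))
  (HN : forall j m n rows cs, (forall c, List.In c cs -> P c) -> P (Node j m n rows cs))
  (c : code R) : P c :=
  match c with
  | Leaf i => HL i
  | Node j m n rows cs => HN j m n rows cs
      ((fix F (l : seq (code R)) : forall c, List.In c l -> P c :=
        match l with
        | nil => fun c H => False_ind _ H
        | c0 :: l' => fun c H =>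
            match H with
            | or_introl E => eq_ind c0 P (code_ind2 HL HN c0) c E
            | or_intror H' => F l' c H'
            end
        end) cs)
  end.

Lemma pairI (A B : Type) (a a' : A) (b b' : B) : (a, b) = (a', b') -> a = a' /\ b = b'.
Proof. by case=> -> ->. Qed.

Section Enc.
Variables (R T : Type) (pi : T * T -> T) (iota : nat -> T) (rho : R -> T).
Hypotheses (pi_inj : injective pi) (iota_inj : injective iota) (rho_inj : injective rho).

Lemma piI a b a' b' : pi (a, b) = pi (a', b') -> a = a' /\ b = b'.
Proof. by move/pi_inj => [-> ->]. Qed.

Definition encL (s : seq T) : T :=
  foldr (fun x acc => pi (iota 1, pi (x, acc))) (pi (iota 0, iota 0)) s.

Lemma encL_inj : injective encL.
Proof.
elim=> [|x s IH] [|x' s'] //=;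
  first [ by case/piI => /iota_inj | by move/piI => [_ /piI [-> /IH ->]] ].
Qed.

Fixpoint enc (c : code R) : T :=
  match c with
  | Leaf i => pi (iota 0, iota i)
  | Node j m n rows cs => pi (iota 1, pi (pi (iota j, pi (iota m, iota n)),
        pi (encL (map (fun r => encL (map rho r)) rows), encL (map enc cs))))
  end.

Lemma enc_inj : injective enc.
Proof.
move=> c; elim/code_ind2: c => [i|j m n rows cs IH] [i'|j' m' n' rows' cs'] /=.
- by move/piI => [_ /iota_inj ->].
- by case/piI => /iota_inj.
- by case/piI => /iota_inj.
move/piI => [_ /piI [/piI [/iota_inj -> /piI [/iota_inj -> /iota_inj ->]]]].
move/piI => [/encL_inj Er /encL_inj Ec].
have Hri : injective (fun r => encL (map rho r)) by move=> r r' /encL_inj /(inj_map rho_inj).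
have -> : rows = rows' by exact: (inj_map Hri Er).
suff -> : cs = cs' by [].
elim: cs cs' IH Ec => [|c cs IHc] [|c' cs'] //= IH [E1 E2].
rewrite (IH c (or_introl erefl) c' E1); congr (_ :: _).
by apply: IHc => // c0 H; apply: IH; right.
Qed.
End Enc.

Section Closure.
Variables (R : pzRingType) (B : lmodType R) (s0 : seq B).

Definition sol (m n : nat) (M : 'I_m -> 'I_n -> R) (c : 'I_m -> B) : nat -> B :=
  epsilon (inhabits (fun _ : nat => (0 : B))) (fun x : nat -> B => forall l, \sum_(k < n) M l k *: x (val k) = c l).

Definition Mof (m n : nat) (rows : seq (seq R)) : 'I_m -> 'I_n -> R :=
  fun l k => nth 0 (nth [::] rows l) k.

Fixpoint eval (c : code R) : B :=
  match c with
  | Leaf i => nth 0 s0 i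
  | Node j m n rows cs => sol (@Mof m n rows) (fun l : 'I_m => nth 0 (map eval cs) l) j
  end.

Definition Cl (b : B) := exists c, eval c = b.

Lemma Cl_pure : pure_closed Cl.
Proof.
move=> m n M cst Hc [x0 Hx].
have [cd cdE] : exists cd : 'I_m -> code R, forall l, eval (cd l) = cst l.
  exists (fun l => epsilon (inhabits (Leaf 0)) (fun c => eval c = cst l)) => l.
  exact: (epsilon_spec (inhabits (Leaf 0)) (fun c => eval c = cst l) (Hc l)).
pose rows := [seq [seq M l k | k <- enum 'I_n] | l <- enum 'I_m].
pose cs := [seq cd l | l <- enum 'I_m].
have EM : @Mof m n rows = M.
  apply: functional_extensionality => l; apply: functional_extensionality => k.
  rewrite /Mof /rows (nth_map l) ?size_enum_ord ?ltn_ord // nth_ord_enum.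
  by rewrite (nth_map k) ?size_enum_ord ?ltn_ord // nth_ord_enum.
have EC : (fun l : 'I_m => nth 0 (map eval cs) l) = cst.
  apply: functional_extensionality => l.
  by rewrite /cs -map_comp (nth_map l) ?size_enum_ord ?ltn_ord // nth_ord_enum /= cdE.
have S := epsilon_spec (inhabits (fun _ : nat => (0 : B)))
   (fun x : nat -> B => forall l, \sum_(k < n) M l k *: x (val k) = cst l) (ex_intro _ x0 Hx).
exists (fun j => eval (Node j m n rows cs)); split.
  by move=> k; exists (Node k m n rows cs).
move=> l /=; rewrite EM EC; exact: S l.
Qed.

Lemma Cl0 : Cl 0.
Proof. by exists (Leaf (size s0)); rewrite /= nth_default. Qed.

Lemma ClL a x y : Cl x -> Cl y -> Cl (a *: x + y).
Proof.
move=> Cx Cy.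
pose M := fun (l k : 'I_2) => if val l == 0%N then (if val k == 0%N then 1 else 0 : R)
                               else (if val k == 0%N then - a else 1).
pose cst := fun (l : 'I_2) => if val l == 0%N then x else y.
have Hcst : forall l, Cl (cst l) by move=> [[|[|l]] Hl].
have Hsolv : exists x0 : nat -> B, forall l, \sum_(k < 2) M l k *: x0 k = cst l.
  exists (fun j : nat => if j == 0%N then x else a *: x + y).
  move=> [[|[|l]] Hl] //; rewrite !big_ord_recl big_ord0 /= /M /cst /=.
    by rewrite scale1r scale0r !addr0.
  by rewrite scale1r addr0 scaleNr addrA addNr add0r.
have [y' [Cy' Ey']] := Cl_pure Hcst Hsolv.
have E0 := Ey' (@Ordinal 2 0 isT).
have E1 := Ey' (@Ordinal 2 1 isT).
move: E0 E1; rewrite !big_ord_recl !big_ord0 /= /M /cst /bump /= addn0.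
rewrite !scale1r scale0r !addr0 => E0.
rewrite E0 scaleNr => E1.
have -> : a *: x + y = y' 1%N by rewrite -E1 addrA subrr add0r.
exact: Cy'.
Qed.
End Closure.

Lemma Cl_card (R : pzRingType) (B : lmodType R) (s0 : seq B) (T : Type)
  (pi : T * T -> T) (iota : nat -> T) (rho : R -> T) :
  injective pi -> injective iota -> injective rho ->
  card_le (subm (Cl0 s0) (ClL (s0:=s0))) T.
Proof.
move=> pii ioi rhi.
pose cd := fun b : B => epsilon (inhabits (Leaf 0)) (fun c => eval s0 c = b).
have cdE : forall u : subm (Cl0 s0) (ClL (s0:=s0)), eval s0 (cd (val u)) = val u.
  move=> u; apply: (epsilon_spec (inhabits (Leaf 0)) (fun c => eval s0 c = val u)).
  exact: (svalP u).
exists (fun u => enc pi iota rho (cd (val u))) => u v /(enc_inj pii ioi rhi) E.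
by apply: val_inj; rewrite -(cdE u) -(cdE v) E.
Qed.


Lemma lin_comp (R : pzRingType) (U V W : lmodType R) (f : {linear U -> V}) (g : {linear V -> W}) :
  islin (fun x => g (f x)).
Proof. by move=> a x y; rewrite (linearP f) (linearP g). Qed.

Lemma Cl_sum (R : pzRingType) (B : lmodType R) (s0 : seq B) n (c : 'I_n -> R) (z : 'I_n -> B) :
  (forall t, Cl s0 (z t)) -> Cl s0 (\sum_t c t *: z t).
Proof.
move=> H; apply: (big_ind (Cl s0)); first exact: Cl0.
- by move=> x y Cx Cy; rewrite -[x]scale1r; apply: ClL.
- by move=> t _; rewrite -[_ *: _]addr0; apply: ClL => //; apply: Cl0.
Qed.

Unset Implicit Arguments.
Set Strict Implicit.
Theorem lemma3p3 (R : pzRingType) (kappa : Type)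
  (Hcoh : left_coherent R)
  (Hinf : infinite_type kappa) (HRk : card_le R kappa)
  (I : Type) (U : I -> lmodType R)
  (HUfp : forall i, FP_injective (U i))
  (HUcard : forall i, card_le (U i) kappa)
  (HUall : forall A : lmodType R, FP_injective A -> card_le A kappa ->
             exists i, lmod_iso A (U i))
  (HUrep : forall i j, lmod_iso (U i) (U j) -> i = j)
  (A B : lmodType R) (f : {linear A -> B})
  (HA : FP_injective A) (HB : FP_injective B)
  (Hf : forall (i : I) (g : {linear U i -> B}),
          exists h : {linear U i -> A}, forall u, f (h u) = g u) :
  lsurj f /\
  (forall (K : lmodType R) (k : {linear K -> A}),
     injective k -> (forall a, f a = 0 <-> exists x, a = k x) ->
     FP_injective K).
Proof.
have [iota iota_inj] := Hinf.
have [rho rho_inj] := HRk.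
have [pi pi_inj] := hessenberg iota_inj.
have lift : forall s0 : seq B, exists l : {linear subm (Cl0 s0) (ClL (s0:=s0)) -> A},
    forall u, f (l u) = sincl (Cl0 s0) (ClL (s0:=s0)) u.
  move=> s0.
  have Cfp := pure_fpi HB (C0:=Cl0 s0) (CL:=ClL (s0:=s0)) (Cl_pure (s0:=s0)).
  have Ccard := Cl_card s0 pi_inj iota_inj rho_inj.
  have [i [phi phib]] := HUall _ Cfp Ccard.
  have [psi [psiK phiK]] := inv_lin phib.
  have [g gE] := mklin_ex (lin_comp psi (sincl (Cl0 s0) (ClL (s0:=s0)))).
  have [h hE] := Hf i g.
  have [l lE] := mklin_ex (lin_comp phi h).
  by exists l => u; rewrite lE hE gE psiK.
split.
  move=> b; have [l lE] := lift [:: b].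
  have : Cl [:: b] b by exists (Leaf 0).
  move=> /(sincl_im (Cl0 [:: b]) (ClL (s0:=[:: b]))) [u ->].
  by exists (l u); rewrite lE.
move=> K k kinj kker F Ffp E i p ii ps pk.
have [k' k'E] := ext_hom HA (i:=i) (p:=p) Ffp ii ps pk k.
have [b0 b0E] := mklin_ex (lin_comp k' f).
have [be beE] : exists be : {linear F -> B}, forall e, be (p e) = f (k' e).
  have [be beE] := factor_surj (p:=p) (phi:=b0) ps
     (fun e H => ltac:(move/pk: H => [x ->]; rewrite b0E k'E; apply/kker; by exists x)).
  by exists be => e; rewrite beE b0E.
have [n [m [p0 [g0 [p0s p0k]]]]] := Ffp.
pose s0 := [seq be (p0 'e_t) | t <- enum 'I_n].
have beC : forall w, Cl s0 (be w).
  move=> w; have [v <-] := p0s w.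
  rewrite [v]row_sum_delta lin_sum lin_sum; apply: Cl_sum => t.
  exists (Leaf t) => /=.
  by rewrite /s0 (nth_map t) ?size_enum_ord ?ltn_ord // nth_ord_enum.
have [be' be'E] := factor_inj (i:=sincl (Cl0 s0) (ClL (s0:=s0))) (phi:=be)
   (sincl_inj (C0:=Cl0 s0) (CL:=ClL (s0:=s0)))
   (fun w => proj1 (sincl_im (Cl0 s0) (ClL (s0:=s0)) (be w)) (beC w)).
have [l lE] := lift s0.
have [de deE] := mklin_ex (lin_comp be' l).
have fde : forall w, f (de w) = be w by move=> w; rewrite deE lE be'E.
have r0l : islin (fun e : E => k' e - de (p e)).
  by move=> a x z; rewrite (linearP k') (linearP p) (linearP de) scalerBr opprD addrACA.
have [r0 r0E] := mklin_ex r0l.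
have [r rE] := factor_inj (i:=k) (phi:=r0) kinj
   (fun e => ltac:(apply/kker; rewrite r0E linearB fde beE subrr; done)).
exists r => x; apply: kinj; rewrite rE r0E k'E.
have -> : p (i x) = 0 by apply/pk; exists x.
by rewrite linear0 subr0.
Qed.
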